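(* Let $\Gamma$ be an imprimitive geodesic-transitive graph. If $\Gamma$ is bipartite, then each halved graph of $\Gamma$ is geodesic-transitive. If $\Gamma$ is antipodal, then its folded graph is geodesic-transitive.
   Context: All graphs are finite, simple, undirected, connected. A geodesic of length $\ell$ is a vertex sequence $(v_0,\dots,v_\ell)$ with consecutive vertices adjacent and $d(v_0,v_\ell)=\ell$; a graph is geodesic-transitive if its automorphism group is transitive on geodesics of each length. For a graph of diameter $d$, the distance-$i$ graph $\Gamma^{(i)}$ joins vertices at distance $i$ in $\Gamma$; $\Gamma$ is imprimitive if some $\Gamma^{(i)}$, $1\le i\le d$, is disconnected. For a connected bipartite graph of diameter $\ge2$, a halved graph is the graph induced by $\Gamma^{(2)}$ on one of the two parts. A graph of diameter $d\ge2$ is antipodal if $\Gamma^{(d)}$ is a disjoint union of cliques (i.e. being equal or at distance $d$ is an equivalence relation); its folded graph has these equivalence classes as vertices, two classes being adjacent iff some vertex of one is adjacent in $\Gamma$ to some vertex of the other. *)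

(* Defs.v *)
(* Finite simple graphs given by a vertex set V : {set T}
   (T a finType) and an adjacency relation e : rel T, taken on V. *)
From mathcomp Require Import all_boot.
Set Implicit Arguments. Unset Strict Implicit. Unset Printing Implicit Defensive.

Section Graphs.
Variable T : finType.
Implicit Types (V A B : {set T}) (e : rel T).

Definition simple_graph e := symmetric e /\ irreflexive e.

Fixpoint ball V e (k : nat) (x : T) : {set T} :=
  if k is k'.+1 then
    ball V e k' x :|: [set y in V | [exists z in ball V e k' x, e z y]]
  else [set x].

(* distance in the graph (V, e); equals #|T|.+1 if y is unreachable *)
Definition dist V e (x y : T) : nat :=
  find (fun k => y \in ball V e k x) (iota 0 #|T|.+1).

Definition connected_graph V e :=
  V != set0 /\ {in V &, forall x y, y \in ball V e #|T| x}.

Definition diameter V e : nat := \max_(x in V) \max_(y in V) dist V e x y.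

Definition distance_graph V e (i : nat) : rel T := fun x y => dist V e x y == i.

Definition geodesic V e (l : nat) (p : seq T) : Prop :=
  if p is v0 :: s then
    [/\ size s = l, all (fun v => v \in V) p, path e v0 s &
        dist V e v0 (last v0 s) = l]
  else False.

Definition automorphism V e (g : T -> T) :=
  [/\ {in V, forall x, g x \in V}, {in V &, injective g} &
      {in V &, forall x y, e (g x) (g y) = e x y}].

Definition geodesic_transitive V e :=
  forall (l : nat) (p q : seq T), geodesic V e l p -> geodesic V e l q ->
    exists g, automorphism V e g /\ map g p = q.

Definition imprimitive V e :=
  exists i, 1 <= i <= diameter V e /\ ~ connected_graph V (distance_graph V e i).

Definition bipartition V e A B :=
  [/\ A :|: B = V, [disjoint A & B] &
      {in V &, forall x y, e x y -> (x \in A) = (y \in B)}].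

(* halved graph on the part A: induced by Gamma^(2) on A *)
Definition halved_adj V e : rel T := distance_graph V e 2.

Definition antipodal_rel V e : rel T :=
  fun x y => (x == y) || (dist V e x y == diameter V e).

Definition antipodal V e :=
  2 <= diameter V e /\
  {in V & &, forall x y z, antipodal_rel V e x y -> antipodal_rel V e y z ->
                             antipodal_rel V e x z}.

Definition antipodal_class V e (x : T) : {set T} := [set y in V | antipodal_rel V e x y].

Definition folded_vertices V e : {set {set T}} := [set antipodal_class V e x | x in V].

Definition folded_adj (e : rel T) : rel {set T} :=
  fun C D => [exists x in C, exists y in D, e x y].
End Graphs.

(* Main.v *)
Require Import Defs.
From mathcomp Require Import all_boot zify.
Set Implicit Arguments. Unset Strict Implicit. Unset Printing Implicit Defensive.

Lemma ar1 k : k./2 <= k.+1./2. Proof. lia. Qed.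
Lemma ar2 k : k.-1./2 <= k./2. Proof. lia. Qed.
Lemma ar3 k : 0 < k -> (k.-1./2).+1 <= k.+1./2. Proof. lia. Qed.
Lemma ar4 j n : j <= n -> j./2 <= n. Proof. lia. Qed.
Lemma ar5 l j : l <= j./2 -> 2 * l <= j. Proof. lia. Qed.

Lemma ar6 a b c : a <= b + c -> c <= 1 -> a.-1 <= b. Proof. lia. Qed.

Section Generic.
Variable T : finType.
Variables (V : {set T}) (e : rel T).

Lemma ballSE k x y : (y \in ball V e k.+1 x) =
  (y \in ball V e k x) || ((y \in V) && [exists z in ball V e k x, e z y]).
Proof. by rewrite /= !inE. Qed.

Lemma ball0E x y : (y \in ball V e 0 x) = (y == x).
Proof. by rewrite /= inE. Qed.

Lemma ball_mono k m x : k <= m -> ball V e k x \subset ball V e m x.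
Proof.
elim: m => [|m IH]; first by rewrite leqn0 => /eqP->.
rewrite leq_eqVlt => /orP[/eqP->//|/IH H].
apply: subset_trans H _; exact: subsetUl.
Qed.

Lemma ball_monoP k m x y : k <= m -> y \in ball V e k x -> y \in ball V e m x.
Proof. by move=> /(ball_mono x) /subsetP; apply. Qed.

Lemma ball_V k x y : x \in V -> y \in ball V e k x -> y \in V.
Proof.
move=> xV; elim: k y => [|k IH] y; first by rewrite ball0E => /eqP->.
by rewrite ballSE => /orP[/IH//|/andP[]].
Qed.

Lemma ball_step k x z y : z \in ball V e k x -> y \in V -> e z y ->
  y \in ball V e k.+1 x.
Proof.
move=> zb yV ezy; rewrite ballSE yV; apply/orP; right; apply/existsP; exists z.
by rewrite zb.
Qed.

Lemma walk_ball x s : path e x s -> all (fun v => v \in V) s ->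
  last x s \in ball V e (size s) x.
Proof.
elim/last_ind: s => [|s y IH]; first by rewrite ball0E.
rewrite rcons_path all_rcons last_rcons size_rcons => /andP[ps ey] /andP[yV aV].
exact: ball_step (IH ps aV) yV ey.
Qed.

Lemma ball_walk k x y : y \in ball V e k x ->
  exists s, [/\ size s <= k, path e x s, all (fun v => v \in V) s & last x s = y].
Proof.
elim: k y => [|k IH] y.
  by rewrite ball0E => /eqP->; exists [::].
rewrite ballSE => /orP[/IH [s [? ? ? ?]]|/andP[yV /existsP[z /andP[zb ezy]]]].
  by exists s; split => //; apply: leqW.
have [s [? ps aV ls]] := IH z zb.
exists (rcons s y); rewrite size_rcons rcons_path all_rcons last_rcons ls ps aV ezy yV.
by split.
Qed.

Lemma ball_trans a b x z y : z \in ball V e a x -> y \in ball V e b z ->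
  y \in ball V e (a + b) x.
Proof.
move=> zb; elim: b y => [|b IH] y; first by rewrite ball0E addn0 => /eqP->.
rewrite ballSE addnS => /orP[/IH H|/andP[yV /existsP[w /andP[wb ewy]]]].
  exact: ball_monoP H.
exact: ball_step (IH _ wb) yV ewy.
Qed.

Lemma dist_le k x y : y \in ball V e k x -> k <= #|T| -> dist V e x y <= k.
Proof.
move=> yb kT; rewrite /dist; case: leqP => // H.
have := @before_find _ 0 (fun k => y \in ball V e k x) (iota 0 #|T|.+1) k H.
by rewrite nth_iota ?add0n ?yb // ltnS.
Qed.

Lemma dist_ball x y : dist V e x y <= #|T| -> y \in ball V e (dist V e x y) x.
Proof.
move=> H; rewrite /dist.
have hs : has (fun k => y \in ball V e k x) (iota 0 #|T|.+1).
  by rewrite has_find size_iota ltnS.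
have := @nth_find _ 0 _ _ hs.
by rewrite nth_iota ?add0n // -(size_iota 0 #|T|.+1) -has_find.
Qed.

Lemma dist_le_min x y k : k < dist V e x y -> y \notin ball V e k x.
Proof.
move=> H; apply/negP => yb.
have kT : k <= #|T|.
  have := find_size (fun k => y \in ball V e k x) (iota 0 #|T|.+1).
  rewrite size_iota /dist in H *; lia.
have := dist_le yb kT; lia.
Qed.

End Generic.
Section Conn.
Variable T : finType.
Variables (V : {set T}) (e : rel T).
Hypotheses (hsym : symmetric e) (hcon : connected_graph V e).

Lemma dist_bound x y : x \in V -> y \in V -> dist V e x y <= #|T|.
Proof. by move=> xV yV; apply: dist_le => //; apply: hcon.2. Qed.

Lemma ballE k x y : x \in V -> y \in V -> (y \in ball V e k x) = (dist V e x y <= k).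
Proof.
move=> xV yV; apply/idP/idP => [yb|H].
  case: (leqP k #|T|) => kT; first exact: dist_le.
  have := dist_bound xV yV; lia.
exact: ball_monoP H (dist_ball (dist_bound xV yV)).
Qed.

Lemma rev_walk x s : x \in V -> path e x s -> all (fun v => v \in V) s ->
  x \in ball V e (size s) (last x s).
Proof.
elim: s x => [|y s IH] x xV /=; first by rewrite ball0E.
move=> /andP[exy ps] /andP[yV aV].
have := ball_trans (IH y yV ps aV) (_ : x \in ball V e 1 y).
rewrite addn1; apply.
by apply: (ball_step (z := y)); rewrite ?ball0E // hsym.
Qed.

Lemma dist_sym x y : x \in V -> y \in V -> dist V e x y = dist V e y x.
Proof.
have H : forall x y, x \in V -> y \in V -> dist V e y x <= dist V e x y.
  move=> a b aV bV.
  have [s [sz ps aVs ls]] := ball_walk (dist_ball (dist_bound aV bV)).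
  have := rev_walk aV ps aVs; rewrite ls ballE //; lia.
by move=> xV yV; apply/eqP; rewrite eqn_leq !H.
Qed.

Lemma dist_tri x y z : x \in V -> y \in V -> z \in V ->
  dist V e x z <= dist V e x y + dist V e y z.
Proof.
move=> xV yV zV; rewrite -ballE //.
apply: (ball_trans (z := y)); apply: dist_ball; exact: dist_bound.
Qed.

Lemma dist0 x y : x \in V -> y \in V -> (dist V e x y == 0) = (x == y).
Proof. by move=> xV yV; rewrite -leqn0 -ballE // ball0E eq_sym. Qed.

Lemma dist_adj x y : x \in V -> y \in V -> e x y -> dist V e x y <= 1.
Proof. by move=> xV yV exy; rewrite -ballE //; apply: (ball_step (z := x)); rewrite ?ball0E. Qed.

Lemma dist_diam x y : x \in V -> y \in V -> dist V e x y <= diameter V e.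
Proof.
move=> xV yV; rewrite /diameter.
have H1 := @leq_bigmax_cond _ (mem V) (fun x => \max_(y in V) dist V e x y) x xV.
have H2 := @leq_bigmax_cond _ (mem V) (fun y => dist V e x y) y yV.
exact: leq_trans H2 H1.
Qed.

Lemma diam_pair : exists a b, [/\ a \in V, b \in V & dist V e a b = diameter V e].
Proof.
have V0 : 0 < #|V| by rewrite card_gt0; exact: hcon.1.
have [a aV Ea] : {a | a \in V & \max_(i in V) \max_(y in V) dist V e i y = \max_(y in V) dist V e a y}.
  exact: eq_bigmax_cond.
have [b bV Eb] : {b | b \in V & \max_(y in V) dist V e a y = dist V e a b}.
  exact: eq_bigmax_cond.
rewrite /diameter Ea Eb.
by exists a, b.
Qed.

Lemma walk_exact x y : x \in V -> y \in V -> exists s,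
  [/\ size s = dist V e x y, path e x s, all (fun v => v \in V) s & last x s = y].
Proof.
move=> xV yV.
have [s [sz ps aV ls]] := ball_walk (dist_ball (dist_bound xV yV)).
exists s; split => //; apply/eqP; rewrite eqn_leq sz /= -ballE // -ls.
exact: walk_ball.
Qed.

Lemma walk_dist x s : x \in V -> path e x s -> all (fun v => v \in V) s ->
  dist V e x (last x s) <= size s.
Proof.
move=> xV ps aV; rewrite -ballE //; first exact: walk_ball.
by have := mem_last x s; rewrite inE => /orP[/eqP->//|]; move/allP: aV; apply.
Qed.

Section Auto.
Variable g : T -> T.
Hypothesis hg : automorphism V e g.

Lemma auto_surj z : z \in V -> exists2 y, y \in V & g y = z.
Proof.
case: hg => gV ginj _ zV.
have : g @: V == V.
  rewrite eqEcard card_in_imset // leqnn andbT.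
  by apply/subsetP => w /imsetP[y yV ->]; apply: gV.
move/eqP => E; rewrite -E in zV; case/imsetP: zV => y yV ->; by exists y.
Qed.

Lemma ball_auto k x y : x \in V -> y \in V ->
  (g y \in ball V e k (g x)) = (y \in ball V e k x).
Proof.
case: (hg) => gV ginj gE xV.
elim: k y => [|k IH] y yV.
  by rewrite !ball0E (inj_in_eq ginj).
rewrite !ballSE IH // gV // yV /=; congr (_ || _).
apply/existsP/existsP => [[z /andP[zb ezy]]|[z /andP[zb ezy]]].
  have zV := ball_V (gV _ xV) zb.
  have [z' z'V ez] := auto_surj zV; subst z.
  by exists z'; rewrite -IH // zb -gE.
have zV := ball_V xV zb.
by exists (g z); rewrite IH // zb gE.
Qed.

Lemma dist_auto x y : x \in V -> y \in V -> dist V e (g x) (g y) = dist V e x y.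
Proof.
case: (hg) => gV _ _ xV yV.
apply/eqP; rewrite eqn_leq; apply/andP; split.
  by rewrite -ballE ?gV // ball_auto // ballE.
by rewrite -ballE // -(ball_auto _ xV yV) ballE ?gV.
Qed.

End Auto.
End Conn.
Section Halved.
Variable T : finType.
Variables (V : {set T}) (e : rel T) (A B : {set T}).
Hypotheses (hsym : symmetric e) (hirr : irreflexive e) (hcon : connected_graph V e)
  (hbip : bipartition V e A B).

Lemma AV x : x \in A -> x \in V.
Proof. by case: hbip => <- _ _ xA; rewrite inE xA. Qed.

Lemma bip_adj x y : x \in V -> y \in V -> e x y -> (y \in A) = ~~ (x \in A).
Proof.
case: hbip => U D H xV yV exy; rewrite (H x y xV yV exy).
have : y \in A :|: B by rewrite U.
rewrite inE; move: D; rewrite disjoints_subset => /subsetP D.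
case yA: (y \in A); case yB: (y \in B) => //=.
by have := D _ yA; rewrite inE yB.
Qed.

Local Notation HA := (halved_adj V e).

Lemma halved2 w z y : w \in A -> y \in A -> w != y -> z \in V -> e w z -> e z y ->
  HA w y.
Proof.
move=> wA yA wy zV ewz ezy; have wV := AV wA; have yV := AV yA.
rewrite /halved_adj /distance_graph.
have le2 : dist V e w y <= 2.
  rewrite -(ballE hcon) //; apply: (ball_step (z := z)) => //.
  by apply: (ball_step (z := w)); rewrite ?ball0E.
have n0 : dist V e w y != 0 by rewrite (dist0 hcon).
have n1 : ~~ (dist V e w y <= 1).
  rewrite -(ballE hcon) // ballSE ball0E eq_sym (negbTE wy) yV /=.
  apply/negP => /existsP [z' /andP[]]; rewrite inE => /eqP-> ewy.
  by have := bip_adj wV yV ewy; rewrite yA wA.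
apply/eqP; lia.
Qed.

Lemma halved_ball x k y : x \in A -> y \in ball V e k x -> y \in V ->
  (y \in A -> y \in ball A HA k./2 x) /\
  (y \notin A -> exists z, [/\ z \in A, z \in ball A HA k.-1./2 x & e z y]).
Proof.
move=> xA; elim: k y => [|k IH] y.
  by rewrite ball0E => /eqP-> _; split; rewrite ?xA // ball0E.
rewrite ballSE => /orP[yb yV|/andP[yV /existsP[z /andP[zb ezy]]] _].
  have [H1 H2] := IH y yb yV; split.
    by move/H1; apply: ball_monoP; apply: ar1.
  move/H2 => [z [zA zb ezy]]; exists z; split => //.
  by apply: ball_monoP zb; apply: ar2.
have zV := ball_V (AV xA) zb.
have Eyz := bip_adj zV yV ezy.
split => yA.
  have zA : z \notin A by rewrite Eyz in yA.
  have k1 : 0 < k.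
    case: k IH zb => // IH; rewrite ball0E => /eqP zx.
    by move: zA; rewrite zx xA.
  have [_ /(_ zA) [w [wA wb ewz]]] := IH z zb zV.
  case: (eqVneq w y) => [<-|wy].
    by apply: ball_monoP wb; apply: leq_trans (ar2 k) (ar1 k).
  have := ball_step wb yA (halved2 wA yA wy zV ewz ezy).
  by apply: ball_monoP; apply: ar3.
have zA : z \in A by move: yA; rewrite Eyz negbK.
have [/(_ zA) zb' _] := IH z zb zV.
exists z; split => //; by apply: ball_monoP zb'.
Qed.

End Halved.
Fixpoint lift (T : Type) (ws us : seq T) : seq T :=
  match ws, us with
  | w :: ws', u :: us' => w :: u :: lift ws' us'
  | _, _ => [::]
  end.

Lemma size_lift (T : Type) (ws us : seq T) : size ws = size us ->
  size (lift ws us) = 2 * size us.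
Proof.
elim: us ws => [|u us IH] [|w ws] //= [] /IH ->; lia.
Qed.

Lemma last_lift (T : Type) (x : T) (ws us : seq T) : size ws = size us ->
  last x (lift ws us) = last x us.
Proof.
elim: us ws x => [|u us IH] [|w ws] x //= [] /IH ->.
by case: us {IH}.
Qed.

Lemma last_lift' (T : Type) (x : T) (ws us : seq T) : size ws = size us ->
  last x (lift ws us) = last x us.
Proof. exact: last_lift. Qed.

Lemma map_lift (T U : Type) (g : T -> U) ws us :
  map g (lift ws us) = lift (map g ws) (map g us).
Proof. by elim: us ws => [|u us IH] [|w ws] //=; rewrite IH. Qed.

Lemma lift_inj (T : Type) (ws us ws' us' : seq T) : size ws = size us ->
  size ws' = size us' -> lift ws us = lift ws' us' -> us = us'.
Proof.
elim: us ws ws' us' => [|u us IH] [|w ws] [|w' ws'] [|u' us'] //= [E] [E'] [_ -> /(IH _ _ _ E E') ->] //.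
Qed.

Lemma all_lift (T : Type) (P : pred T) ws us : all P ws -> all P us -> all P (lift ws us).
Proof.
elim: us ws => [|u us IH] [|w ws] //= /andP[-> aw] /andP[-> au] /=; exact: IH.
Qed.

Section HalvedGT.
Variable T : finType.
Variables (V : {set T}) (e : rel T) (A B : {set T}).
Hypotheses (hsym : symmetric e) (hirr : irreflexive e) (hcon : connected_graph V e)
  (hbip : bipartition V e A B) (hgt : geodesic_transitive V e).

Local Notation HA := (halved_adj V e).

Lemma HA_mid u v : u \in V -> v \in V -> HA u v ->
  exists2 w, w \in V & e u w && e w v.
Proof.
move=> uV vV; rewrite /halved_adj /distance_graph => /eqP H.
have : v \in ball V e 2 u by rewrite (ballE hcon) // H.
rewrite ballSE => /orP[vb|/andP[_ /existsP[w /andP[wb ewv]]]].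
  by have := ballE hcon 1 uV vV; rewrite vb H.
move: wb; rewrite ballSE ball0E => /orP[/eqP wu|/andP[wV /existsP[u' /andP[]]]].
  have := dist_adj hcon uV vV; rewrite H -wu ewv => /(_ isT) //.
rewrite ball0E => /eqP-> euw.
by exists w; rewrite ?euw.
Qed.

Lemma lift_exists x s : x \in A -> all (fun v => v \in A) s -> path HA x s ->
  exists ws, [/\ size ws = size s, path e x (lift ws s) & all (fun v => v \in V) ws].
Proof.
elim: s x => [|y s IH] x xA /=; first by exists [::].
move=> /andP[yA aA] /andP[hxy ps].
have [ws [sz pw aw]] := IH y yA aA ps.
have [w wV /andP[exw ewy]] := HA_mid (AV hbip xA) (AV hbip yA) hxy.
by exists (w :: ws); rewrite /= sz exw ewy pw wV aw.
Qed.

Lemma geo_lift l x s ws : geodesic A HA l (x :: s) ->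
  size ws = size s -> path e x (lift ws s) -> all (fun v => v \in V) ws ->
  geodesic V e (2 * l) (x :: lift ws s).
Proof.
move=> [sz /= /andP[xA aA] ps dl] sw pw aw.
have xV := AV hbip xA.
have aV : all (fun v => v \in V) s.
  by apply/allP => v /(allP aA) /(AV hbip).
have lA : last x s \in A.
  by have := mem_last x s; rewrite inE => /orP[/eqP->//|/(allP aA)].
have lV := AV hbip lA.
split.
- by rewrite size_lift // sz.
- by rewrite /= xV; apply: all_lift.
- exact: pw.
have up : dist V e x (last x (lift ws s)) <= 2 * l.
  rewrite -sz -(size_lift sw); apply: (walk_dist hcon) => //; exact: all_lift.
rewrite last_lift // in up *.
have jT := dist_bound hcon xV lV.
have lb : last x s \in ball V e (dist V e x (last x s)) x by rewrite (ballE hcon).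
have [/(_ lA) hb _] := halved_ball hcon hbip xA lb lV.
have j2 := ar4 jT.
have := dist_le hb j2.
rewrite dl => H; apply/eqP; rewrite eqn_leq up /=; exact: ar5 H.
Qed.

Lemma parity g u : automorphism V e g -> u \in A -> g u \in A ->
  {in V, forall y, (g y \in A) = (y \in A)}.
Proof.
move=> hg uA guA y yV.
have uV := AV hbip uA.
case: (hg) => gV _ gE.
suff H : forall k y, y \in ball V e k u -> (g y \in A) = (y \in A).
  exact: (H _ _ (hcon.2 _ _ uV yV)).
elim=> [|k IH] z; first by rewrite ball0E => /eqP->; rewrite uA guA.
rewrite ballSE => /orP[/IH//|/andP[zV /existsP[w /andP[wb ewz]]]].
have wV := ball_V uV wb.
rewrite (bip_adj hbip (gV _ wV) (gV _ zV)) ?gE // (bip_adj hbip wV zV ewz) IH //.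
Qed.

Lemma halved_gt : geodesic_transitive A HA.
Proof.
move=> l [|x s] [|x' s'] //= Hp Hq.
have [sz /andP[xA aA] ps _] := Hp.
have [sz' /andP[xA' aA'] ps' _] := Hq.
have [ws [sw pw aw]] := lift_exists xA aA ps.
have [ws' [sw' pw' aw']] := lift_exists xA' aA' ps'.
have G := geo_lift Hp sw pw aw.
have G' := geo_lift Hq sw' pw' aw'.
have [g [hg /= [gx]]] := hgt G G'.
rewrite map_lift => /lift_inj Em.
have Es : map g s = s' by apply: Em; rewrite ?size_map.
exists g; split; last by rewrite /= gx Es.
case: (hg) => gV ginj gE.
split.
- move=> y yA; rewrite (parity hg xA) //; first by rewrite gx.
  by move: (AV hbip yA).
- by apply: sub_in2 ginj => y /(AV hbip).
- move=> a b aA0 bA0; rewrite /halved_adj /distance_graph.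
  by rewrite (dist_auto hcon hg) //; [move: aA0 | move: bA0] => /(AV hbip).
Qed.

End HalvedGT.
Section Folded.
Variable T : finType.
Variables (V : {set T}) (e : rel T).
Hypotheses (hsym : symmetric e) (hirr : irreflexive e) (hcon : connected_graph V e)
  (hgt : geodesic_transitive V e) (hant : antipodal V e).

Local Notation d := (diameter V e).
Local Notation ar := (antipodal_rel V e).
Local Notation cls := (antipodal_class V e).

Lemma ar_refl x : ar x x.
Proof. by rewrite /antipodal_rel eqxx. Qed.

Lemma ar_sym x y : x \in V -> y \in V -> ar x y = ar y x.
Proof. by move=> xV yV; rewrite /antipodal_rel eq_sym (dist_sym hsym hcon). Qed.

Lemma ar_trans x y z : x \in V -> y \in V -> z \in V -> ar x y -> ar y z -> ar x z.
Proof. by move=> xV yV zV; apply: hant.2. Qed.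

Lemma in_cls x y : (y \in cls x) = (y \in V) && ar x y.
Proof. by rewrite inE. Qed.

Lemma cls_self x : x \in V -> x \in cls x.
Proof. by move=> xV; rewrite in_cls xV ar_refl. Qed.

Lemma cls_eq x y : x \in V -> y \in V -> ar x y -> cls x = cls y.
Proof.
move=> xV yV axy; apply/setP => z; rewrite !in_cls.
case zV: (z \in V) => //=; apply/idP/idP => H.
  by apply: (ar_trans yV xV zV) => //; rewrite ar_sym.
exact: (ar_trans xV yV zV).
Qed.

Lemma adj_not_ar x y : x \in V -> y \in V -> e x y -> ~~ ar x y.
Proof.
move=> xV yV exy; rewrite /antipodal_rel negb_or; apply/andP; split.
  by apply/eqP => E; move: exy; rewrite E hirr.
have := dist_adj hcon xV yV exy; have := hant.1; lia.
Qed.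

Lemma keyP a b x : a \in V -> b \in V -> x \in V -> e a b -> ar a x ->
  exists y, [/\ y \in V, e x y & ar b y].
Proof.
move=> aV bV xV eab.
rewrite /antipodal_rel => /orP[/eqP <-|/eqP dax].
  by exists b; rewrite bV eab eqxx.
have d2 := hant.1.
have tri := dist_tri hcon aV bV xV.
have ab1 := dist_adj hcon aV bV eab.
have bxd := dist_diam e bV xV.
have bxn : dist V e b x != d.
  apply/negP => /eqP E.
  have : ar b a.
    apply: (ar_trans bV xV aV); first by rewrite /antipodal_rel E eqxx orbT.
    by rewrite ar_sym // /antipodal_rel dax eqxx orbT.
  by rewrite (negbTE (adj_not_ar bV aV _)) // hsym.
have bx : dist V e b x = d.-1 by lia.
have [s [sz ps aVs ls]] := walk_exact hcon bV xV.
have Gs : geodesic V e d.-1 (b :: s) by rewrite /= ls bV aVs sz bx.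
have [p0 [p1 [p0V p1V dp]]] := diam_pair hcon.
have [t [tz pt aVt lt]] := walk_exact hcon p0V p1V.
case/lastP: t tz pt aVt lt => [|t' z]; first by rewrite /= => E; lia.
rewrite size_rcons rcons_path all_rcons last_rcons => tz /andP[pt' ewz] /andP[zV aVt'] ez.
subst z.
have wV : last p0 t' \in V.
  by have := mem_last p0 t'; rewrite inE => /orP[/eqP->//|/(allP aVt')].
have Gt : geodesic V e d.-1 (p0 :: t').
  rewrite /= p0V aVt' pt'; split => //; first by rewrite -dp -tz.
  apply/eqP; rewrite eqn_leq; apply/andP; split.
    by have := walk_dist hcon p0V pt' aVt'; rewrite -dp -tz.
  rewrite -dp; exact: ar6 (dist_tri hcon p0V wV p1V) (dist_adj hcon wV p1V ewz).
have [g [hg /= [gp0 gt']]] := hgt Gt Gs.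
case: (hg) => gV ginj gE.
exists (g p1); split; first exact: gV.
  have : g (last p0 t') = x by rewrite -ls -gt' -gp0 last_map.
  by move=> <-; rewrite gE.
by rewrite /antipodal_rel -gp0 (dist_auto hcon hg) // dp eqxx orbT.
Qed.

Local Notation F := (folded_vertices V e).
Local Notation Fe := (folded_adj e).

Lemma cls_F x : x \in V -> cls x \in F.
Proof. by move=> xV; apply: imset_f. Qed.

Lemma F_cls C : C \in F -> exists2 x, x \in V & C = cls x.
Proof. by case/imsetP => x xV ->; exists x. Qed.

Lemma fold_lift s x0 : x0 \in V -> all (fun C => C \in F) s -> path Fe (cls x0) s ->
  exists t, [/\ size t = size s, path e x0 t, all (fun v => v \in V) t & map cls t = s].
Proof.
elim: s x0 => [|C s IH] x0 x0V /=; first by exists [::].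
move=> /andP[CF aF] /andP[/existsP[a /andP[aC /existsP[b /andP[bC eab]]]] ps].
have [c cV Cc] := F_cls CF; subst C.
move: aC bC; rewrite !in_cls => /andP[aV ax] /andP[bV cb].
have ax' : ar a x0 by rewrite ar_sym.
have [y [yV exy bY]] := keyP aV bV x0V eab ax'.
have cy : ar c y := ar_trans cV bV yV cb bY.
have Ey : cls y = cls c := esym (cls_eq cV yV cy).
rewrite -Ey in ps.
have [t [st pt aVt mt]] := IH y yV aF ps.
by exists (y :: t); rewrite /= st exy pt yV aVt mt Ey.
Qed.

Lemma proj_path x t : x \in V -> path e x t -> all (fun v => v \in V) t ->
  path Fe (cls x) (map cls t).
Proof.
elim: t x => [|y t IH] x xV //= /andP[exy pt] /andP[yV aV].
rewrite IH // andbT; apply/existsP; exists x; rewrite cls_self //=.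
by apply/existsP; exists y; rewrite cls_self.
Qed.

Lemma card_TF : #|T| <= #|{set T}|.
Proof. by have := @leq_card T _ _ (@set1_inj T). Qed.

Lemma fold_dist x y : x \in V -> y \in V -> dist F Fe (cls x) (cls y) <= dist V e x y.
Proof.
move=> xV yV.
have [t [sz pt aV lt]] := walk_exact hcon xV yV.
have aF : all (fun C => C \in F) (map cls t).
  by rewrite all_map; apply/allP => v /(allP aV) vV /=; exact: cls_F.
have := walk_ball (proj_path xV pt aV) aF.
rewrite last_map lt size_map sz => H; apply: dist_le H _.
exact: leq_trans (dist_bound hcon xV yV) card_TF.
Qed.

Section AutoF.
Variable g : T -> T.
Hypothesis hg : automorphism V e g.

Lemma ar_auto x y : x \in V -> y \in V -> ar (g x) (g y) = ar x y.
Proof.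
case: (hg) => gV ginj gE xV yV.
by rewrite /antipodal_rel (inj_in_eq ginj) // (dist_auto hcon hg).
Qed.

Lemma cls_auto x : x \in V -> g @: cls x = cls (g x).
Proof.
case: (hg) => gV ginj gE xV; apply/setP => z; apply/imsetP/idP.
  by move=> [y]; rewrite in_cls => /andP[yV axy] ->; rewrite in_cls gV // ar_auto.
rewrite in_cls => /andP[zV az].
have [y yV gy] := auto_surj hg zV; subst z.
by exists y; rewrite // in_cls yV -ar_auto.
Qed.

Lemma Fe_auto (C D : {set T}) : C \subset V -> D \subset V -> Fe (g @: C) (g @: D) = Fe C D.
Proof.
case: (hg) => gV ginj gE /subsetP CV /subsetP DV.
apply/existsP/existsP => [[a /andP[/imsetP[a' a'C ->] /existsP[b /andP[/imsetP[b' b'D ->] eab]]]]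
  | [a /andP[aC /existsP[b /andP[bD eab]]]]].
  exists a'; rewrite a'C; apply/existsP; exists b'; rewrite b'D -gE //; [exact: CV | exact: DV].
exists (g a); rewrite imset_f //; apply/existsP; exists (g b); rewrite imset_f // gE //.
  exact: CV.
exact: DV.
Qed.
End AutoF.

Lemma cls_sub x : cls x \subset V.
Proof. by apply/subsetP => y; rewrite in_cls => /andP[]. Qed.

Lemma geo_fold l c s : c \in V -> geodesic F Fe l (cls c :: s) ->
  exists t, geodesic V e l (c :: t) /\ map cls t = s.
Proof.
move=> cV [sz /= /andP[CF aF] ps dl].
have [t [st pt aVt mt]] := fold_lift cV aF ps.
exists t; split => //.
rewrite /= cV aVt pt; split => //; first by rewrite st.
have lV : last c t \in V.
  by have := mem_last c t; rewrite inE => /orP[/eqP->//|/(allP aVt)].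
apply/eqP; rewrite eqn_leq; apply/andP; split.
  by have := walk_dist hcon cV pt aVt; rewrite st sz.
by rewrite -dl -mt last_map; apply: fold_dist.
Qed.

Lemma fold_gt : geodesic_transitive F Fe.
Proof.
move=> l [|C s] [|C' s'] //= Hp Hq.
have CF : C \in F by case: Hp => _ /andP[].
have CF' : C' \in F by case: Hq => _ /andP[].
have [c cV Ec] := F_cls CF; subst C.
have [c' cV' Ec'] := F_cls CF'; subst C'.
have [t [Gt mt]] := geo_fold cV Hp.
have [t' [Gt' mt']] := geo_fold cV' Hq.
have [g [hg Hm]] := hgt Gt Gt'.
case: (hg) => gV ginj gE.
exists (fun C : {set T} => g @: C); split.
  split.
  - by move=> C /F_cls [x xV ->]; rewrite cls_auto //; apply: cls_F; apply: gV.
  - move=> C D /F_cls [x xV ->] /F_cls [y yV ->]; rewrite !cls_auto // => E.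
    apply: cls_eq => //; rewrite -(ar_auto hg) //.
    have : g y \in cls (g x) by rewrite E cls_self ?gV.
    by rewrite in_cls => /andP[].
  - move=> C D /F_cls [x xV ->] /F_cls [y yV ->]; apply: Fe_auto => //; exact: cls_sub.
have E : cls c :: s = map cls (c :: t) by rewrite /= mt.
have E' : cls c' :: s' = map cls (c' :: t') by rewrite /= mt'.
suff H : map (fun C : {set T} => g @: C) (cls c :: s) = cls c' :: s' by [].
rewrite E E' -Hm -!map_comp; apply/eq_in_map => v vin /=.
apply: cls_auto => //.
by case: Gt => _ /allP /(_ v vin).
Qed.

End Folded.

Lemma bip_sym (T : finType) (V A B : {set T}) (e : rel T) :
  symmetric e -> bipartition V e A B -> bipartition V e B A.
Proof.
move=> hsym [U D H]; split; first by rewrite setUC.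
  by rewrite disjoint_sym.
by move=> x y xV yV exy; rewrite (H y x yV xV) // hsym.
Qed.

Theorem lemma3p2 (T : finType) (V : {set T}) (e : rel T) :
  simple_graph e -> connected_graph V e ->
  geodesic_transitive V e -> imprimitive V e ->
  (forall A B : {set T}, bipartition V e A B ->
     geodesic_transitive A (halved_adj V e) /\
     geodesic_transitive B (halved_adj V e)) /\
  (antipodal V e ->
     geodesic_transitive (folded_vertices V e) (folded_adj e)).
Proof.
move=> [hsym hirr] hcon hgt _; split.
  move=> A B hbip; split; first exact: (halved_gt hcon hbip hgt).
  exact: (halved_gt hcon (bip_sym hsym hbip) hgt).
move=> hant; exact: (fold_gt hsym hirr hcon hgt hant).
Qed.
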